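(* Let $(M_t)_{t=0}^n$ be a square-integrable martingale adapted to a filtration $(\mathcal F_t)_{t=0}^n$ with $M_0=0$. Then for all $x,\beta>0$ and $\alpha\ge0$, $$P\Big(\bigcup_{t=1}^n\big\{M_t\ge x\ \text{and}\ \langle M\rangle_t+[M]_t\le\alpha M_t+\beta\big\}\Big)\le\exp\Big(-\min\Big\{\frac{x^2}{8\beta},\frac{x}{6\alpha}\Big\}\Big),$$ with the convention $x/(6\alpha)=+\infty$ when $\alpha=0$.
   Context: For $t\ge1$, $\langle M\rangle_t=\sum_{i=1}^t\mathbb E[(M_i-M_{i-1})^2\mid\mathcal F_{i-1}]$ (total conditional variance) and $[M]_t=\sum_{i=1}^t(M_i-M_{i-1})^2$ (total quadratic variation). *)

(* Defs.v *)
From HB Require Import structures.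
From mathcomp Require Import all_boot all_order all_algebra.
From mathcomp Require Import all_classical all_reals all_analysis.
Set Implicit Arguments. Unset Strict Implicit. Unset Printing Implicit Defensive.
Import Order.TTheory GRing.Theory Num.Theory.
Local Open Scope classical_set_scope.
Local Open Scope ring_scope.

Section Defs.
Context {d : measure_display} {T : measurableType d} {R : realType}.

Definition sub_sigma_algebra (G : set (set T)) :=
  sigma_algebra setT G /\ G `<=` measurable.

Definition filtration (n : nat) (F : nat -> set (set T)) :=
  (forall t, (t <= n)%N -> sub_sigma_algebra (F t)) /\
  (forall s t, (s <= t)%N -> (t <= n)%N -> F s `<=` F t).

Definition measurable_wrt (G : set (set T)) (X : T -> R) :=
  forall B : set R, measurable B -> G (X @^-1` B).

Definition cond_exp_version (P : probability T R) (G : set (set T))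
    (X V : T -> R) :=
  [/\ measurable_wrt G V, P.-integrable setT (fun w => (V w)%:E) &
      forall A, G A ->
        (\int[P]_(w in A) (V w)%:E = \int[P]_(w in A) (X w)%:E)%E].

Definition sq_int_martingale (P : probability T R) (n : nat)
    (F : nat -> set (set T)) (M : nat -> T -> R) :=
  [/\ forall t, (t <= n)%N -> measurable_wrt (F t) (M t),
      forall t, (t <= n)%N -> P.-integrable setT (fun w => ((M t w) ^+ 2)%:E)
    & forall t, (1 <= t <= n)%N -> forall A, F t.-1 A ->
        (\int[P]_(w in A) (M t w)%:E = \int[P]_(w in A) (M t.-1 w)%:E)%E].

Definition quad_var (M : nat -> T -> R) (t : nat) (w : T) : R :=
  \sum_(1 <= i < t.+1) (M i w - M i.-1 w) ^+ 2.

(* <M>_t = sum_{i=1}^t V_i where V_i is a version of E[(M_i-M_{i-1})^2 | F_{i-1}] *)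
Definition cond_var (V : nat -> T -> R) (t : nat) (w : T) : R :=
  \sum_(1 <= i < t.+1) V i w.

End Defs.

(* Main.v *)
Require Import Defs.
From HB Require Import structures.
From mathcomp Require Import all_boot all_order all_algebra.
From mathcomp Require Import all_classical all_reals all_analysis.
From mathcomp Require Import measurable_realfun.
From mathcomp Require Import ring lra zify.
Set Implicit Arguments. Unset Strict Implicit. Unset Printing Implicit Defensive.
Import Order.TTheory GRing.Theory Num.Theory.
Import numFieldNormedType.Exports.
Local Open Scope classical_set_scope.
Local Open Scope ring_scope.

Section E.
Context {R : realType}.
Implicit Types (y u : R).

Lemma L_exp y : expR (y - y ^+ 2 / 2) <= 1 + y + y ^+ 2 / 2.
Proof.
set u := y - y ^+ 2 / 2.
have h1 := expR_ge1Dx (- u).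
have hE : expR u * expR (- u) = 1 by rewrite -expRD subrr expR0.
have hp := expR_gt0 u.
have hq := expR_gt0 (- u).
have ha : 0 < 1 - y + y ^+ 2 / 2 by nra.
have hab : 1 <= (1 - y + y ^+ 2 / 2) * (1 + y + y ^+ 2 / 2) by nra.
rewrite /u in h1 hE hp hq *.
set a := 1 - y + y ^+ 2 / 2 in ha hab.
have haE : a <= expR (- (y - y ^+ 2 / 2)) by rewrite /a; lra.
nra.
Qed.

Lemma L_bd y : expR (y - y ^+ 2 / 2) <= expR (1 / 2).
Proof. rewrite ler_expR; have := sqr_ge0 (y - 1); nra. Qed.

Lemma L_u u : (1 + u) * expR (- u) <= 1.
Proof.
have h1 := expR_ge1Dx u.
have hE : expR u * expR (- u) = 1 by rewrite -expRD subrr expR0.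
have hq := expR_gt0 (- u).
nra.
Qed.

Definition cnt (N : nat) y : R := \sum_(j < N) (if (j.+1)%:R <= y then 1 else 0).

Lemma cnt_S N y : cnt N.+1 y = cnt N y + (if (N.+1)%:R <= y then 1 else 0).
Proof. by rewrite /cnt big_ord_recr. Qed.

Lemma cnt_leN N y : cnt N y <= N%:R.
Proof.
elim: N => [|N IH]; first by rewrite /cnt big_ord0.
rewrite cnt_S -natr1; case: ifP => _; lra.
Qed.

Lemma cnt_ge0 N y : 0 <= cnt N y.
Proof. by apply: sumr_ge0 => i _; case: ifP. Qed.

Lemma cnt_le N y : 0 <= y -> cnt N y <= y.
Proof.
move=> y0; elim: N => [|N IH]; first by rewrite /cnt big_ord0.
rewrite cnt_S; case: ifP => h /=.
  have := cnt_leN N y; rewrite -natr1 in h; lra.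
by rewrite addr0.
Qed.

Lemma cnt_all N y : N%:R <= y -> cnt N y = N%:R.
Proof.
elim: N => [|N IH]; first by rewrite /cnt big_ord0.
move=> h; rewrite cnt_S IH; last by rewrite -natr1 in h; lra.
by rewrite ifT // natr1.
Qed.

Lemma cnt_ge N y : y <= N%:R -> y - 1 < cnt N y.
Proof.
elim: N => [|N IH] h.
  by rewrite /cnt big_ord0; lra.
rewrite cnt_S; have [hN|hN] := leP y N%:R.
  have := IH hN; case: ifP => /=; lra.
rewrite cnt_all; last exact: ltW.
case: ifP => /=; lra.
Qed.
End E.

Section I.
Context {d : measure_display} {T : measurableType d} {R : realType}.
Variable P : probability T R.
Implicit Types (H : set (set T)) (f g : T -> R).

Definition mk H f := measurable_fun (setT : set (g_sigma_algebraType H)) f.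

Lemma wrt_mk H f : measurable_wrt H f -> mk H f.
Proof. move=> mf _ B mB; rewrite setTI; apply: sub_sigma_algebra; exact: mf. Qed.

Lemma mk_wrt H f : sigma_algebra setT H -> mk H f -> measurable_wrt H f.
Proof.
move=> sH mf B mB; have := mf measurableT B mB; rewrite setTI.
by rewrite /measurable /= (sigma_algebra_id sH).
Qed.

Lemma mk_amb H f : sigma_algebra setT H -> H `<=` measurable -> mk H f ->
  measurable_fun setT f.
Proof. move=> sH Hs mf _ B mB; rewrite setTI; apply: Hs; exact: mk_wrt. Qed.

Lemma mk_mono H1 H2 f : sigma_algebra setT H1 -> H1 `<=` H2 -> mk H1 f -> mk H2 f.
Proof. move=> s1 h mf; apply: wrt_mk => B mB; apply: h; exact: mk_wrt. Qed.

Definition Int f := P.-integrable setT (EFin \o f).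

Lemma eqI (F G : T -> \bar R) : P.-integrable setT F -> (forall w, F w = G w) ->
  P.-integrable setT G.
Proof. move=> i h; exact: (eq_integrable measurableT F G (fun w _ => h w) i). Qed.

Lemma bnd f (B : R) : (forall w, `|f w| <= B) -> [bounded f x | x in setT].
Proof.
move=> hB; rewrite /bounded_near; near=> M; move=> t _ /=.
apply: le_trans (hB t) _; near: M; apply: nbhs_pinfty_ge; exact: num_real.
Unshelve. all: end_near. Qed.

Lemma IntM f g (B : R) : Int f -> measurable_fun setT g ->
  (forall w, `|g w| <= B) -> Int (fun w => f w * g w).
Proof.
move=> iF mg hB; by apply: (eqI (integrableMl measurableT iF mg (bnd hB))) => w /=; rewrite EFinM.
Qed.

Lemma Int_cst (c : R) : Int (fun=> c).
Proof. exact: finite_measure_integrable_cst. Qed.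

Lemma Int_bnd g (B : R) : measurable_fun setT g ->
  (forall w, `|g w| <= B) -> Int g.
Proof.
move=> mg hB; by apply: (eqI (IntM (Int_cst 1) mg hB)) => w /=; rewrite mul1r.
Qed.

Lemma IntD f g : Int f -> Int g -> Int (fun w => f w + g w).
Proof.
move=> i1 i2; by apply: (eqI (integrableD measurableT i1 i2)) => w /=; rewrite EFinD.
Qed.

Lemma IntB f g : Int f -> Int g -> Int (fun w => f w - g w).
Proof.
move=> i1 i2; by apply: (eqI (integrableB measurableT i1 i2)) => w /=; rewrite EFinB.
Qed.

Lemma IntZ (c : R) f : Int f -> Int (fun w => c * f w).
Proof.
move=> i1; by apply: (eqI (integrableZl measurableT c i1)) => w /=; rewrite EFinM.
Qed.

Lemma Int_sum (N : nat) (h : nat -> T -> R) : (forall j, Int (h j)) ->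
  Int (fun w => \sum_(j < N) h j w).
Proof.
move=> hi; elim: N => [|N IH].
  by under eq_fun do rewrite big_ord0; exact: Int_cst.
under eq_fun do rewrite big_ord_recr /=; exact: IntD.
Qed.

Lemma RintD f g : Int f -> Int g ->
  \int[P]_w (f w + g w) = \int[P]_w f w + \int[P]_w g w.
Proof. by move=> i1 i2; rewrite RintegralD. Qed.

Lemma RintB f g : Int f -> Int g ->
  \int[P]_w (f w - g w) = \int[P]_w f w - \int[P]_w g w.
Proof. by move=> i1 i2; rewrite RintegralB. Qed.

Lemma RintZ (c : R) f : Int f -> \int[P]_w (c * f w) = c * \int[P]_w f w.
Proof. by move=> i1; rewrite RintegralZl. Qed.

Lemma Rint_sum (N : nat) (h : nat -> T -> R) : (forall j, Int (h j)) ->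
  \int[P]_w (\sum_(j < N) h j w) = \sum_(j < N) \int[P]_w h j w.
Proof.
move=> hi; elim: N => [|N IH].
  under eq_Rintegral do rewrite big_ord0.
  by rewrite big_ord0 Rintegral_cst// mul0r.
under eq_Rintegral do rewrite big_ord_recr /=.
by rewrite RintD ?IH ?big_ord_recr//; exact: Int_sum.
Qed.

Lemma Int_sumN (N : nat) (h : nat -> T -> R) : (forall j, (j < N)%N -> Int (h j)) ->
  Int (fun w => \sum_(j < N) h j w).
Proof.
elim: N => [|N IH] hi.
  by under eq_fun do rewrite big_ord0; exact: Int_cst.
under eq_fun do rewrite big_ord_recr /=; apply: IntD; last exact: hi.
by apply: IH => j hj; apply: hi; exact: ltnW.
Qed.

Lemma Rint_sumN (N : nat) (h : nat -> T -> R) : (forall j, (j < N)%N -> Int (h j)) ->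
  \int[P]_w (\sum_(j < N) h j w) = \sum_(j < N) \int[P]_w h j w.
Proof.
elim: N => [|N IH] hi.
  under eq_Rintegral do rewrite big_ord0.
  by rewrite big_ord0 Rintegral_cst// mul0r.
have hi' : forall j, (j < N)%N -> Int (h j) by move=> j hj; apply: hi; exact: ltnW.
under eq_Rintegral do rewrite big_ord_recr /=.
by rewrite RintD ?IH ?big_ord_recr//; [exact: Int_sumN | exact: hi].
Qed.

Lemma Rint_le f g : Int f -> Int g -> (forall w, f w <= g w) ->
  \int[P]_w f w <= \int[P]_w g w.
Proof. by move=> i1 i2 h; apply: le_Rintegral. Qed.

Lemma Rint_indic f (A : set T) : measurable A -> Int f ->
  \int[P]_w (f w * \1_A w) = fine (\int[P]_(w in A) (f w)%:E)%E.
Proof.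
move=> mA i1; rewrite -[RHS]/(\int[P]_(w in A) f w) [RHS]Rintegral_mkcond.
apply: eq_Rintegral => w _; rewrite patchE indicE.
by case: (w \in A); rewrite ?mulr1 ?mulr0.
Qed.


Lemma IntLe f g : measurable_fun setT f -> (forall w, `|f w| <= `|g w|) ->
  Int g -> Int f.
Proof.
move=> mf h ig; apply: (le_integrable measurableT _ _ ig).
  exact/measurable_EFinP.
by move=> w _; rewrite /= lee_fin.
Qed.

Lemma Int_abs f : Int f -> Int (fun w => `|f w|).
Proof. move=> i; by apply: (eqI (integrable_abse i)) => w /=. Qed.

Lemma indic_bnd (A : set T) w : `|\1_A w : R| <= 1.
Proof. by rewrite indicE; case: (w \in A); rewrite ?normr0 ?normr1. Qed.

Lemma meas_sum (f : nat -> T -> R) t :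
  (forall i, (1 <= i <= t)%N -> measurable_fun setT (f i)) ->
  measurable_fun setT (fun w => \sum_(1 <= i < t.+1) f i w).
Proof.
elim: t => [|t IH] h.
  rewrite (_ : (fun w => _) = cst 0); first exact: measurable_cst.
  by apply/funext => w; rewrite big_geq.
rewrite (_ : (fun w => _) = fun w => \sum_(1 <= i < t.+1) f i w + f t.+1 w).
  apply: measurable_funD; last by apply: h; rewrite ltn0Sn leqnn.
  by apply: IH => i /andP[h1 h2]; apply: h; rewrite h1 ltnW.
by apply/funext => w; rewrite big_nat_recr.
Qed.

Lemma L1 H X Y G (B : nat) : sigma_algebra setT H -> H `<=` measurable ->
  Int X -> Int Y ->
  (forall A, H A -> (\int[P]_(w in A) (X w)%:E = \int[P]_(w in A) (Y w)%:E)%E) ->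
  mk H G -> (forall w, 0 <= G w) -> (forall w, G w <= B%:R) ->
  \int[P]_w (X w * G w) = \int[P]_w (Y w * G w).
Proof.
move=> sH Hs iX iY hXY mG G0 GB.
pose Z := fun w => X w - Y w.
have iZ : Int Z := IntB iX iY.
have mGa := mk_amb sH Hs mG.
have hG : forall w, `|G w| <= B%:R by move=> w; rewrite ger0_norm.
have iZG : Int (fun w => Z w * G w) := IntM iZ mGa hG.
have hA : forall A, H A -> \int[P]_w (Z w * \1_A w) = 0.
  move=> A HA; have mA := Hs A HA.
  have iXA : P.-integrable A (EFin \o X) := integrableS measurableT mA (@subsetT _ A) iX.
  have iYA : P.-integrable A (EFin \o Y) := integrableS measurableT mA (@subsetT _ A) iY.
  rewrite Rint_indic // /Z; under eq_integral do rewrite EFinB.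
  rewrite (integralB_EFin mA iXA iYA) (hXY _ HA) subee //.
  exact: integrable_fin_num.
have key : forall k : nat, (0 < k)%N ->
    `|\int[P]_w (Z w * G w)| <= \int[P]_w `|Z w| / k%:R.
  move=> k k0.
  pose N := (k * B)%N.
  pose A j := [set w | (j.+1)%:R <= k%:R * G w].
  have HA : forall j, H (A j).
    move=> j; have mkG : mk H (fun w => k%:R * G w).
      by apply: measurable_funM => //; exact: measurable_cst.
    have := mk_wrt sH mkG (measurable_itv `[(j.+1)%:R, +oo[).
    by rewrite preimage_itvcy.
  have ind : forall j w, \1_(A j) w = (if (j.+1)%:R <= k%:R * G w then 1 else 0 : R).
    move=> j w; rewrite indicE; case: ifP => h; first by rewrite mem_set.
    by rewrite memNset // /A /= h.
  pose Gk := fun w => k%:R^-1 * cnt N (k%:R * G w).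
  have ZGk : forall w, Z w * Gk w = k%:R^-1 * \sum_(j < N) (Z w * \1_(A j) w).
    move=> w; rewrite /Gk /cnt mulrCA; congr (_ * _); rewrite mulr_sumr.
    by apply: eq_bigr => j _; rewrite ind.
  have iZA : forall j : nat, Int (fun w => Z w * \1_(A j) w).
    move=> j; apply: (IntM iZ) ; [apply: measurable_indic; exact: Hs | exact: indic_bnd].
  have iZGk : Int (fun w => Z w * Gk w).
    by apply: (eqI (IntZ k%:R^-1 (Int_sum N iZA))) => w /=; rewrite ZGk.
  have EZGk : \int[P]_w (Z w * Gk w) = 0.
    under eq_Rintegral do rewrite ZGk.
    rewrite RintZ; last exact: (Int_sum N iZA).
    rewrite (Rint_sum N iZA) big1 ?mulr0 // => j _.
    exact: hA.
  have kp : 0 < k%:R :> R by rewrite ltr0n.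
  have hGk : forall w, `|G w - Gk w| <= k%:R^-1.
    move=> w; set y := k%:R * G w.
    have y0 : 0 <= y by rewrite /y mulr_ge0 // ler0n.
    have yN : y <= N%:R by rewrite /y /N natrM ler_wpM2l // ler0n.
    have h1 := cnt_le N y0; have h2 := cnt_ge yN.
    have -> : G w - Gk w = k%:R^-1 * (y - cnt N y).
      by rewrite /Gk /y mulrBr mulrA mulVf ?mul1r // gt_eqF.
    have up : 0 < k%:R^-1 :> R by rewrite invr_gt0.
    rewrite normrM ger0_norm ?ltW // ger0_norm; last by lra.
    nra.
  have iAZ := Int_abs iZ.
  have -> : \int[P]_w (Z w * G w) =
     \int[P]_w (Z w * G w - Z w * Gk w) + \int[P]_w (Z w * Gk w).
    by rewrite RintB // subrK.
  rewrite EZGk addr0.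
  apply: le_trans; first exact: le_normr_Rintegral (IntB iZG iZGk).
  rewrite -RintegralZr //.
  apply: Rint_le.
  - exact: Int_abs (IntB iZG iZGk).
  - by apply: (eqI (integrableZr measurableT k%:R^-1 iAZ)) => w /=; rewrite EFinM.
  move=> w; rewrite -mulrBr normrM ler_wpM2l //.
have hZ : \int[P]_w (Z w * G w) = 0.
  set a := \int[P]_w (Z w * G w); set C := \int[P]_w `|Z w|.
  apply/eqP/negPn/negP => a0.
  have ap : 0 < `|a| by rewrite normr_gt0.
  have C0 : 0 <= C by apply: Rintegral_ge0.
  have := key (Num.truncn (C / `|a|)).+1 isT.
  have := truncnS_gt (C / `|a|).
  set q := C / `|a|; set k := ((Num.truncn q).+1)%:R.
  have kp : 0 < k by rewrite ltr0n.
  have hq : q * `|a| = C by rewrite /q mulfVK // gt_eqF.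
  have hr : C / k * k = C by rewrite mulfVK // gt_eqF.
  set r := C / k in hr *.
  nra.
apply/eqP; rewrite -subr_eq0 -RintB; first last.
- exact: (IntM iY mGa hG).
- exact: (IntM iX mGa hG).
apply/eqP; rewrite -hZ; apply: eq_Rintegral => w _; by rewrite /Z mulrBl.
Qed.

End I.

Section Main.
Context {d : measure_display} {T : measurableType d} {R : realType}.
Context (P : probability T R) (n : nat) (F : nat -> set (set T))
  (M : nat -> T -> R) (V : nat -> T -> R) (x alpha beta : R).
Context (hF : filtration n F) (hM : sq_int_martingale P n F M)
  (hM0 : forall w, M 0%N w = 0)
  (hV : forall i, (1 <= i <= n)%N ->
     cond_exp_version P (F i.-1) (fun w => (M i w - M i.-1 w) ^+ 2) (V i))
  (x0 : (0:R) < x) (b0 : (0:R) < beta) (a0 : (0:R) <= alpha).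

Definition lam : R := x / (alpha * x + beta).
Definition Vp i w := Num.max (V i w) 0.
Definition Dl i w := M i w - M i.-1 w.
Definition Q t w := \sum_(1 <= i < t.+1) (Dl i w ^+ 2 + Vp i w).
Definition W t w := expR (lam * M t w - lam ^+ 2 / 2 * Q t w).

Lemma Vp_ge0 i w : 0 <= Vp i w.
Proof. by rewrite /Vp le_max lexx orbT. Qed.

Lemma Q0 w : Q 0 w = 0.
Proof. by rewrite /Q big_geq. Qed.

Lemma QS k w : Q k.+1 w = Q k w + (Dl k.+1 w ^+ 2 + Vp k.+1 w).
Proof. by rewrite /Q big_nat_recr. Qed.

Lemma W0 w : W 0 w = 1.
Proof. by rewrite /W Q0 hM0 !mulr0 subr0 expR0. Qed.

Lemma WS k w : W k.+1 w = W k w * expR (lam * Dl k.+1 w - (lam * Dl k.+1 w) ^+ 2 / 2)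
   * expR (- (lam ^+ 2 / 2 * Vp k.+1 w)).
Proof.
rewrite /W QS -!expRD; congr expR; rewrite /Dl /=; ring.
Qed.

Lemma W_ge0 k w : 0 <= W k w.
Proof. exact: expR_ge0. Qed.

Lemma W_le k w : W k w <= expR (k%:R / 2).
Proof.
elim: k => [|k IH]; first by rewrite W0 mul0r expR0.
rewrite WS.
have h1 := L_bd (lam * Dl k.+1 w).
have h2 : expR (- (lam ^+ 2 / 2 * Vp k.+1 w)) <= 1.
  rewrite -expR0 ler_expR oppr_le0; apply: mulr_ge0 (Vp_ge0 _ _).
  by apply: mulr_ge0 => //; rewrite sqr_ge0.
have h3 : expR (k.+1%:R / 2 : R) = expR (k%:R / 2) * expR (1 / 2).
  by rewrite -natr1 mulrDl expRD.
rewrite h3 -[X in _ <= X]mulr1.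
apply: ler_pM => //.
  by apply: mulr_ge0; [exact: W_ge0 | exact: expR_ge0].
exact: (ler_pM (W_ge0 k w) (expR_ge0 _) IH h1).
Qed.


Lemma sF k : (k <= n)%N -> sigma_algebra setT (F k).
Proof. by move=> h; case: hF => h1 _; case: (h1 k h). Qed.

Lemma Fs k : (k <= n)%N -> F k `<=` measurable.
Proof. by move=> h; case: hF => h1 _; case: (h1 k h). Qed.

Lemma Fmono i k : (i <= k)%N -> (k <= n)%N -> F i `<=` F k.
Proof. by move=> h1 h2; case: hF => _ h; exact: h. Qed.

Lemma mkF i k (f : T -> R) : (i <= k)%N -> (k <= n)%N -> mk (F i) f -> mk (F k) f.
Proof.
move=> h1 h2; apply: mk_mono; last exact: Fmono.
exact: sF (leq_trans h1 h2).
Qed.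

Lemma mkM t : (t <= n)%N -> mk (F t) (M t).
Proof. by move=> h; case: hM => h1 _ _; exact: wrt_mk (h1 t h). Qed.

Lemma mkV i : (1 <= i <= n)%N -> mk (F i.-1) (V i).
Proof. by move=> h; case: (hV h) => h1 _ _; exact: wrt_mk. Qed.

Lemma amb k (f : T -> R) : (k <= n)%N -> mk (F k) f -> measurable_fun setT f.
Proof. by move=> h; apply: mk_amb; [exact: sF | exact: Fs]. Qed.

Lemma mkDl i k : (1 <= i)%N -> (i <= k)%N -> (k <= n)%N -> mk (F k) (Dl i).
Proof.
move=> h1 h2 h3; apply: measurable_funB.
  by apply: (mkF h2 h3); apply: mkM; exact: leq_trans h3.
apply: (mkF (i := i.-1)); [exact: leq_trans (leq_pred i) h2 | exact: h3 |].
apply: mkM; apply: leq_trans h3; exact: leq_trans (leq_pred i) h2.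
Qed.

Lemma mkVp i k : (1 <= i)%N -> (i <= k.+1)%N -> (k <= n)%N -> (i <= n)%N -> mk (F k) (Vp i).
Proof.
move=> h1 h2 h3 h4.
have : mk (F k) (V i).
  apply: (mkF (i := i.-1)) => //; first by lia.
  by apply: mkV; rewrite h1 h4.
move=> mV; exact: (measurable_maxr mV (measurable_cst (0:R))).
Qed.


Lemma mkQ t k : (t <= k)%N -> (k <= n)%N -> mk (F k) (Q t).
Proof.
elim: t => [|t IH] h1 h2.
  rewrite (_ : Q 0 = cst 0); first exact: measurable_cst.
  by apply/funext => w; rewrite Q0.
rewrite (_ : Q t.+1 = fun w => Q t w + (Dl t.+1 w ^+ 2 + Vp t.+1 w)); last first.
  by apply/funext => w; rewrite QS.
apply: measurable_funD; first exact: IH (ltnW h1) h2.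
apply: measurable_funD; first by apply: measurable_funX; exact: mkDl.
apply: mkVp; lia.
Qed.

Lemma mkW k : (k <= n)%N -> mk (F k) (W k).
Proof.
move=> h; apply: measurableT_comp; first exact: measurable_expR.
apply: measurable_funB.
  exact: (measurable_funM (measurable_cst lam) (mkM h)).
exact: (measurable_funM (measurable_cst (lam ^+ 2 / 2)) (mkQ (leqnn k) h)).
Qed.

Definition ev t w : bool := (x <= M t w) && (Q t w <= alpha * M t w + beta).
Fixpoint cc k w : bool := if k is k'.+1 then cc k' w && ~~ ev k w else true.
Definition Cs k := [set w | cc k w].

Lemma gs H (A : set T) : sigma_algebra setT H ->
  (H A <-> measurable (A : set (g_sigma_algebraType H))).
Proof.
move=> sH; split; first exact: sub_sigma_algebra.
by rewrite /measurable /= (sigma_algebra_id sH).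
Qed.

Lemma Ev_meas t : (t <= n)%N ->
  measurable ([set w | ev t w] : set (g_sigma_algebraType (F t))).
Proof.
move=> h.
have m1 : measurable_fun (setT : set (g_sigma_algebraType (F t))) (fun w : T => x <= M t w).
  exact: (measurable_fun_ler (measurable_cst x) (mkM h)).
have m2 : measurable_fun (setT : set (g_sigma_algebraType (F t)))
    (fun w : T => Q t w <= alpha * M t w + beta).
  apply: measurable_fun_ler; first exact: mkQ.
  apply: measurable_funD; last exact: measurable_cst.
  exact: (measurable_funM (measurable_cst alpha) (mkM h)).
have := measurable_and m1 m2 measurableT (Y := [set true]) I.
by rewrite setTI.
Qed.

Lemma Cs_F k : (k <= n)%N -> F k (Cs k).
Proof.
elim: k => [|k IH] h.
  apply/(gs _ (sF h)); rewrite (_ : Cs 0 = setT); first exact: measurableT.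
  by apply/seteqP; split => w.
apply/(gs _ (sF h)).
rewrite (_ : Cs k.+1 = Cs k `&` ~` [set w | ev k.+1 w]); last first.
  apply/seteqP; split => w /=; rewrite /Cs /=.
    by move=> /andP[-> /negP].
  by move=> [-> /negP ->].
apply: measurableI.
  apply/(gs _ (sF h)); apply: (Fmono (leqnSn k) h); exact: IH (ltnW h).
apply: measurableC; exact: Ev_meas.
Qed.

Fixpoint Zp k w : R := if k is k'.+1 then (if cc k' w then W k w else Zp k' w) else W 0 w.

Lemma Zp_W k w : cc k w -> Zp k w = W k w.
Proof. by case: k => //= k /andP[-> _]. Qed.

Lemma Zp_S k w : Zp k.+1 w = Zp k w + \1_(Cs k) w * (W k.+1 w - W k w).
Proof.
rewrite /= indicE; case: (boolP (cc k w)) => h.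
  by rewrite mem_set // Zp_W // mul1r addrC subrK.
by rewrite memNset ?mul0r ?addr0 //; apply/negP.
Qed.

Lemma Zp_bnd k w : 0 <= Zp k w <= expR (k%:R / 2).
Proof.
elim: k => [|k IH] /=; first by rewrite W_ge0 W_le.
case: (cc k w); first by rewrite W_ge0 W_le.
case/andP: IH => -> h /=; apply: le_trans h _; rewrite ler_expR ler_pM2r ?ler_nat //.
Qed.

Lemma Zp_meas k : (k <= n)%N -> measurable_fun setT (Zp k).
Proof.
elim: k => [|k IH] h.
  apply: (amb (k := 0)) => //; exact: mkW.
rewrite (_ : Zp k.+1 = fun w => Zp k w + \1_(Cs k) w * (W k.+1 w - W k w)); last first.
  by apply/funext => w; rewrite Zp_S.
apply: measurable_funD; first exact: IH (ltnW h).
apply: measurable_funM.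
  apply: measurable_indic; apply: (Fs (ltnW h)); exact: Cs_F (ltnW h).
apply: measurable_funB; [exact: amb (mkW h) | exact: amb (ltnW h) (mkW (ltnW h))].
Qed.


Lemma measM t : (t <= n)%N -> measurable_fun setT (M t).
Proof. by move=> h; apply: (amb h); exact: mkM. Qed.

Lemma IntMt t : (t <= n)%N -> Int P (M t).
Proof.
move=> h; apply: (IntLe (g := fun w => 1 + M t w ^+ 2)); first exact: measM.
  move=> w; rewrite [X in _ <= X]ger0_norm; last by rewrite addr_ge0 // sqr_ge0.
  by rewrite ler_norml; apply/andP; split; nra.
apply: IntD; first exact: Int_cst.
by case: hM => _ h2 _; exact: h2.
Qed.

Lemma IntD2 i : (1 <= i <= n)%N -> Int P (fun w => Dl i w ^+ 2).
Proof.
move=> /andP[h1 h2].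
have hi : (i.-1 <= n)%N by apply: leq_trans h2; exact: leq_pred.
apply: (IntLe (g := fun w => 2 * M i w ^+ 2 + 2 * M i.-1 w ^+ 2)).
- apply: measurable_funX; apply: measurable_funB; [exact: measM | exact: measM].
- move=> w; rewrite /Dl ger0_norm ?sqr_ge0 // ger0_norm; last first.
    by rewrite addr_ge0 // mulr_ge0 // sqr_ge0.
  have := sqr_ge0 (M i w + M i.-1 w); nra.
apply: IntD; apply: IntZ; by case: hM => _ hh _; exact: hh.
Qed.

Lemma IntV i : (1 <= i <= n)%N -> Int P (V i).
Proof. by move=> h; case: (hV h). Qed.

Lemma IntVp i : (1 <= i <= n)%N -> Int P (Vp i).
Proof.
move=> h; apply: (IntLe (g := V i)); last exact: IntV.
- apply: (amb (k := i.-1)); first by case/andP: h => _ h'; apply: leq_trans h'; exact: leq_pred.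
  apply: (measurable_maxr (mkV h) (measurable_cst (0:R))).
- move=> w; rewrite ger0_norm ?Vp_ge0 // /Vp ge_max normr_ge0 andbT.
  exact: ler_norm.
Qed.


Lemma indic_ge0 (C : set T) w : 0 <= \1_C w :> R.
Proof. by rewrite indicE; case: (_ \in _). Qed.

Lemma indic_le1 (C : set T) w : \1_C w <= 1 :> R.
Proof. by rewrite indicE; case: (_ \in _). Qed.

Lemma step k (C : set T) : (k < n)%N -> F k C ->
  \int[P]_w (\1_C w * W k.+1 w) <= \int[P]_w (\1_C w * W k w).
Proof.
move=> hk HC.
have hkn : (k <= n)%N := ltnW hk.
have h1n : (1 <= k.+1 <= n)%N by apply/andP; split.
pose u w := lam ^+ 2 / 2 * Vp k.+1 w.
pose G w := \1_C w * W k w * expR (- u w).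
have mC : measurable C := Fs hkn HC.
have mkG : mk (F k) G.
  apply: measurable_funM; first apply: measurable_funM.
  - apply: measurable_indic; exact: (gs _ (sF hkn)).1.
  - exact: mkW.
  apply: measurableT_comp; first exact: measurable_expR.
  apply: measurable_funN.
  exact: (measurable_funM (measurable_cst _) (mkVp (ltn0Sn k) (leqnn _) hkn hk)).
pose B := (Num.truncn (expR (k%:R / 2) : R)).+1.
have G0 : forall w, 0 <= G w.
  by move=> w; rewrite mulr_ge0 ?expR_ge0 // mulr_ge0 ?indic_ge0 ?W_ge0.
have GB : forall w, G w <= B%:R.
  move=> w; apply: (le_trans _ (ltW (truncnS_gt _))).
  have e1 : expR (- u w) <= 1.
    rewrite -expR0 ler_expR oppr_le0 /u; apply: mulr_ge0 (Vp_ge0 _ _).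
    by apply: mulr_ge0 => //; rewrite sqr_ge0.
  rewrite /G -[X in _ <= X]mulr1; apply: ler_pM.
  - by rewrite mulr_ge0 ?indic_ge0 ?W_ge0.
  - exact: expR_ge0.
  - rewrite -[X in _ <= X]mul1r; apply: ler_pM.
    + exact: indic_ge0.
    + exact: W_ge0.
    + exact: indic_le1.
    + exact: W_le.
  - exact: e1.
have mGa : measurable_fun setT G := amb hkn mkG.
have hGn : forall w, `|G w| <= B%:R by move=> w; rewrite ger0_norm.
have iG : Int P G := Int_bnd P mGa hGn.
have iM1 : Int P (fun w => M k.+1 w * G w) := IntM (IntMt hk) mGa hGn.
have iM0 : Int P (fun w => M k w * G w) := IntM (IntMt hkn) mGa hGn.
have iD2 : Int P (fun w => Dl k.+1 w ^+ 2 * G w) := IntM (IntD2 h1n) mGa hGn.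
have iVG : Int P (fun w => V k.+1 w * G w) := IntM (IntV h1n) mGa hGn.
have iVpG : Int P (fun w => Vp k.+1 w * G w) := IntM (IntVp h1n) mGa hGn.
have mCi : measurable_fun setT (\1_C : T -> R) by apply: measurable_indic.
have iCW1 : Int P (fun w => \1_C w * W k.+1 w).
  apply: (Int_bnd P (B := expR (k.+1%:R / 2))).
    by apply: measurable_funM => //; exact: (amb hk (mkW hk)).
  move=> w; rewrite ger0_norm ?mulr_ge0 ?indic_ge0 ?W_ge0 //.
  rewrite -[X in _ <= X]mul1r; apply: ler_pM.
  + exact: indic_ge0.
  + exact: W_ge0.
  + exact: indic_le1.
  + exact: W_le.
have iCW0 : Int P (fun w => \1_C w * W k w).
  apply: (Int_bnd P (B := expR (k%:R / 2))).
    by apply: measurable_funM => //; exact: (amb hkn (mkW hkn)).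
  move=> w; rewrite ger0_norm ?mulr_ge0 ?indic_ge0 ?W_ge0 //.
  rewrite -[X in _ <= X]mul1r; apply: ler_pM.
  + exact: indic_ge0.
  + exact: W_ge0.
  + exact: indic_le1.
  + exact: W_le.
have E1 : \int[P]_w (M k.+1 w * G w) = \int[P]_w (M k w * G w).
  apply: (L1 (sF hkn) (Fs hkn) (IntMt hk) (IntMt hkn) _ mkG G0 GB).
  by move=> A HA; case: hM => _ _ h3; exact: (h3 _ h1n A HA).
have E2 : \int[P]_w (Dl k.+1 w ^+ 2 * G w) = \int[P]_w (V k.+1 w * G w).
  apply: (L1 (sF hkn) (Fs hkn) (IntD2 h1n) (IntV h1n) _ mkG G0 GB).
  by move=> A HA; case: (hV h1n) => _ _ h3; rewrite (h3 A HA).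
have iS : Int P (fun w => G w + lam * (M k.+1 w * G w - M k w * G w)
     + lam ^+ 2 / 2 * (Dl k.+1 w ^+ 2 * G w)).
  by apply: IntD; [apply: IntD => //; apply: IntZ; exact: IntB | exact: IntZ].
have s1 : \int[P]_w (\1_C w * W k.+1 w) <=
   \int[P]_w (G w + lam * (M k.+1 w * G w - M k w * G w)
     + lam ^+ 2 / 2 * (Dl k.+1 w ^+ 2 * G w)).
  apply: Rint_le => // w.
  have hl := L_exp (lam * Dl k.+1 w).
  have -> : \1_C w * W k.+1 w = G w * expR (lam * Dl k.+1 w - (lam * Dl k.+1 w) ^+ 2 / 2).
    by rewrite WS /G /u; ring.
  have -> : G w + lam * (M k.+1 w * G w - M k w * G w) + lam ^+ 2 / 2 * (Dl k.+1 w ^+ 2 * G w)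
     = G w * (1 + lam * Dl k.+1 w + (lam * Dl k.+1 w) ^+ 2 / 2).
    by rewrite /Dl /=; ring.
  exact: ler_wpM2l.
have s2 : \int[P]_w (G w + lam * (M k.+1 w * G w - M k w * G w)
     + lam ^+ 2 / 2 * (Dl k.+1 w ^+ 2 * G w)) =
   \int[P]_w G w + lam * (\int[P]_w (M k.+1 w * G w) - \int[P]_w (M k w * G w))
   + lam ^+ 2 / 2 * \int[P]_w (Dl k.+1 w ^+ 2 * G w).
  rewrite RintD; last exact: IntZ.
    rewrite RintD //; last by apply: IntZ; exact: IntB.
    by rewrite !RintZ ?RintB //; exact: IntB.
  by apply: IntD => //; apply: IntZ; exact: IntB.
have s4 : \int[P]_w (V k.+1 w * G w) <= \int[P]_w (Vp k.+1 w * G w).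
  apply: Rint_le => // w; apply: ler_wpM2r => //.
  by rewrite /Vp le_max lexx.
have s5 : \int[P]_w (G w + lam ^+ 2 / 2 * (Vp k.+1 w * G w)) =
   \int[P]_w G w + lam ^+ 2 / 2 * \int[P]_w (Vp k.+1 w * G w).
  by rewrite RintD ?RintZ //; exact: IntZ.
have s6 : \int[P]_w (G w + lam ^+ 2 / 2 * (Vp k.+1 w * G w)) <=
    \int[P]_w (\1_C w * W k w).
  apply: Rint_le => //; first by apply: IntD => //; exact: IntZ.
  move=> w; have hu := L_u (u w).
  have -> : G w + lam ^+ 2 / 2 * (Vp k.+1 w * G w) =
     (\1_C w * W k w) * ((1 + u w) * expR (- u w)).
    by rewrite /G /u; ring.
  rewrite -[X in _ <= X]mulr1; apply: ler_wpM2l => //.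
  by rewrite mulr_ge0 ?indic_ge0 ?W_ge0.
have l0 : 0 <= lam ^+ 2 / 2 by rewrite mulr_ge0 // sqr_ge0.
have s4' := ler_wpM2l l0 s4.
move: s1 s2 s4' s5 s6; rewrite E1 E2; lra.
Qed.


Lemma IntCW k (C : set T) : (k <= n)%N -> measurable C ->
  Int P (fun w => \1_C w * W k w).
Proof.
move=> hk mC; apply: (Int_bnd P (B := expR (k%:R / 2))).
  apply: measurable_funM; first by apply: measurable_indic.
  exact: (amb hk (mkW hk)).
move=> w; rewrite ger0_norm ?mulr_ge0 ?indic_ge0 ?W_ge0 //.
rewrite -[X in _ <= X]mul1r; apply: ler_pM.
+ exact: indic_ge0.
+ exact: W_ge0.
+ exact: indic_le1.
+ exact: W_le.
Qed.

Lemma IntZp k : (k <= n)%N -> Int P (Zp k).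
Proof.
move=> hk; apply: (Int_bnd P (B := expR (k%:R / 2))); first exact: Zp_meas.
by move=> w; case/andP: (Zp_bnd k w) => h1 h2; rewrite ger0_norm.
Qed.

Lemma Zp_int k : (k <= n)%N -> \int[P]_w Zp k w <= 1.
Proof.
elim: k => [|k IH] h.
  under eq_Rintegral do rewrite /= W0.
  rewrite Rintegral_cst // mul1r.
  have h1 : fine (P [set: T]) <= 1 by rewrite probability_setT.
  exact: h1.

have hk : (k <= n)%N := ltnW h.
have mC : measurable (Cs k) := Fs hk (Cs_F hk).
under eq_Rintegral do rewrite Zp_S mulrBr.
rewrite RintD; first last.
- by apply: IntB; apply: IntCW.
- exact: IntZp.
rewrite RintB; [|exact: IntCW|exact: IntCW].
have := step h (Cs_F hk); have := IH hk; lra.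
Qed.

Definition c0 : R := x ^+ 2 / (2 * (alpha * x + beta)).

Lemma W_big t w : ev t w -> expR c0 <= W t w.
Proof.
case/andP => hx hQ; rewrite ler_expR.
have s0 : alpha * x + beta > 0.
  have h := mulr_ge0 a0 (ltW x0); have hb : beta > 0 := b0; lra.
have hl : lam * (alpha * x + beta) = x by rewrite /lam mulfVK // gt_eqF.
have l0 : 0 <= lam by rewrite /lam divr_ge0 // ltW.
have hc : c0 = x * lam / 2 by rewrite /c0 /lam; field; rewrite gt_eqF.
have la : lam * alpha <= 1.
  have e : lam * alpha * (alpha * x + beta) = alpha * x by rewrite mulrAC hl mulrC.
  have : lam * alpha * (alpha * x + beta) <= 1 * (alpha * x + beta).
    by rewrite e mul1r; have hb : beta > 0 := b0; lra.
  by rewrite ler_pM2r.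
have h1 : lam ^+ 2 / 2 * Q t w <= lam ^+ 2 / 2 * (alpha * M t w + beta).
  by rewrite ler_wpM2l // mulr_ge0 // sqr_ge0.
have h2 : (lam - lam ^+ 2 * alpha / 2) * x <= (lam - lam ^+ 2 * alpha / 2) * M t w.
  by rewrite ler_wpM2l //; nra.
have h3 : lam ^+ 2 * (alpha * x + beta) = lam * x by rewrite expr2 -mulrA hl.
rewrite hc; nra.
Qed.

Lemma cc_spec k w : cc k w -> forall s, (1 <= s <= k)%N -> ~~ ev s w.
Proof.
elim: k => [|k IH] /=; first by move=> _ s; lia.
case/andP => hc he s hs; have [->//|hsk] := eqVneq s k.+1.
apply: IH => //; lia.
Qed.

Lemma cc_nspec k w : ~~ cc k w -> exists s, (1 <= s <= k)%N /\ ev s w.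
Proof.
elim: k => [|k IH] //=; rewrite negb_and negbK; case/orP => h.
  by have [s [hs e]] := IH h; exists s; split => //; lia.
by exists k.+1; split => //; lia.
Qed.

Lemma Zp_big k w : (exists t, (1 <= t <= k)%N /\ ev t w) -> expR c0 <= Zp k w.
Proof.
elim: k => [|k IH]; first by case=> t [ht _]; lia.
case=> t [ht e] /=; case: (boolP (cc k w)) => hc.
  have [htk|htk] := eqVneq t k.+1; first by rewrite htk in e; exact: W_big.
  have := cc_spec hc (s := t); rewrite e; move=> /(_ _)/negP; lia.
by apply: IH; exact: cc_nspec.
Qed.


Lemma null_V i : (1 <= i <= n)%N -> P [set w | V i w < 0] = 0%E.
Proof.
move=> hi.
have hi1 : (i.-1 <= n)%N by case/andP: hi => _ h; apply: leq_trans h; exact: leq_pred.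
have sH := sF hi1; have Hs := Fs hi1.
have mV : mk (F i.-1) (V i) := mkV hi.
have HA : forall e : R, F i.-1 [set w | V i w <= e].
  move=> e; have := mk_wrt sH mV (measurable_itv `]-oo, e]).
  by rewrite preimage_itvNyc.
have key : forall m : nat, P [set w | V i w <= - (m.+1%:R)^-1] = 0%E.
  move=> m; set e := (m.+1%:R)^-1 : R; set A := [set w | _ ].
  have HAm := HA (- e); have mA := Hs _ HAm.
  have e0 : 0 < e by rewrite invr_gt0 ltr0n.
  have iV := IntV hi.
  have mAi : measurable_fun setT (\1_A : T -> R) by apply: measurable_indic.
  have iVA : Int P (fun w => V i w * \1_A w) := IntM iV mAi (indic_bnd A).
  have iA : Int P (\1_A : T -> R) := Int_bnd P mAi (indic_bnd A).
  have i1 : \int[P]_w (V i w * \1_A w) <= \int[P]_w (- e * \1_A w).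
    apply: Rint_le => //; first exact: IntZ.
    move=> w; rewrite indicE; case: (boolP (w \in A)) => h.
      by rewrite !mulr1; move/set_mem: h.
    by rewrite !mulr0.
  have i2 : \int[P]_w (- e * \1_A w) = - e * fine (P A).
    by rewrite RintZ // /Rintegral integral_indic // setIT.
  have i3 : 0 <= \int[P]_w (V i w * \1_A w).
    rewrite Rint_indic //; case: (hV hi) => _ _ h3; rewrite (h3 A HAm).
    by apply: fine_ge0; apply: integral_ge0 => w _; rewrite lee_fin sqr_ge0.
  have i4 : 0 <= fine (P A) by apply: fine_ge0; exact: measure_ge0.
  have i5 : fine (P A) = 0 by nra.
  by rewrite -[P A]fineK ?fin_num_measure // i5.
have -> : [set w | V i w < 0] = \bigcup_m [set w | V i w <= - (m.+1%:R)^-1].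
  apply/seteqP; split => w /=.
    move=> hw; exists (Num.truncn ((- V i w)^-1)) => //=.
    have h1 := truncnS_gt ((- V i w)^-1).
    have hp : 0 < - V i w by rewrite oppr_gt0.
    rewrite invf_plt ?posrE ?ltr0n // in h1.
    by rewrite lerNr; apply: ltW.
  case=> m _ /= h; apply: le_lt_trans h _.
  by rewrite oppr_lt0 invr_gt0 ltr0n.
apply/negligibleP.
  by apply: bigcupT_measurable => m; apply: (Hs _ (HA _)).
apply: negligible_bigcup => m; apply/negligibleP; last exact: key.
exact: (Hs _ (HA _)).
Qed.

Lemma sum_ge (f : nat -> R) N j : (forall i, 0 <= f i) -> (j < N)%N ->
  f j <= \sum_(i < N) f i.
Proof.
move=> f0; elim: N => // N IH hj; rewrite big_ord_recr /=.
have s0 : 0 <= \sum_(i < N) f i by apply: sumr_ge0.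
have [->|hjN] := eqVneq j N; first by rewrite lerDr.
have := IH (_ : (j < N)%N); have := f0 N.
by move=> h1 h2; have := h2 ltac:(lia); lra.
Qed.

Lemma Q_eq t w : (t <= n)%N -> (forall i, (1 <= i <= n)%N -> 0 <= V i w) ->
  Q t w = cond_var V t w + quad_var M t w.
Proof.
move=> ht hV0; rewrite /Q /cond_var /quad_var addrC -big_split /=.
apply: eq_big_nat => i hi; congr (_ + _).
apply/eqP; rewrite eq_le /Vp le_max lexx /= ge_max lexx andbT.
apply: hV0; lia.
Qed.

Lemma final : (P [set w | exists t, (1 <= t <= n)%N /\ (x <= M t w)%R /\
        (cond_var V t w + quad_var M t w <= alpha * M t w + beta)%R]
   <= (expR (- c0))%:E)%E.
Proof.
set Ev := [set w | _].
have mEv : measurable Ev.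
  rewrite (_ : Ev = \bigcup_(t in [set t | (1 <= t <= n)%N])
     ([set w | x <= M t w] `&`
      [set w | cond_var V t w + quad_var M t w <= alpha * M t w + beta])).
    apply: bigcup_measurable => t /= /andP[ht1 ht2]; apply: measurableI.
      have := measurable_fun_ler (measurable_cst x) (measM ht2) measurableT (Y := [set true]) I.
      by rewrite setTI.
    have mq : measurable_fun setT (quad_var M t).
      apply: meas_sum => i /andP[h1 h2]; apply: measurable_funX; apply: measurable_funB.
        by apply: measM; apply: leq_trans ht2.
      by apply: measM; apply: leq_trans ht2; apply: leq_trans h2; exact: leq_pred.
    have mc : measurable_fun setT (cond_var V t).
      apply: meas_sum => i /andP[h1 h2].
      apply: (amb (k := i.-1)); first by lia.
      by apply: mkV; lia.
    have := measurable_fun_ler (measurable_funD mc mq)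
      (measurable_funD (measurable_funM (measurable_cst alpha) (measM ht2)) (measurable_cst beta))
      measurableT (Y := [set true]) I.
    by rewrite setTI.
  apply/seteqP; split => w /=.
    by case=> t [ht [h1 h2]]; exists t => //.
  by case=> t ht [h1 h2]; exists t.
pose Nn i := [set w | V i w < 0].
have mN : forall i, (1 <= i <= n)%N -> measurable (Nn i).
  move=> i hi; have hi1 : (i.-1 <= n)%N by lia.
  apply: (Fs hi1); have := mk_wrt (sF hi1) (mkV hi) (measurable_itv `]-oo, 0[).
  by rewrite preimage_itvNyo.
pose h i w := \1_(Nn i.+1) w : R.
have mh : forall i, (i < n)%N -> measurable_fun setT (h i).
  by move=> i hi; apply: measurable_indic; apply: mN; lia.
pose g w := expR (- c0) * Zp n w + \sum_(i < n) h i w.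
have ih : forall i, (i < n)%N -> Int P (h i).
  by move=> i hi; exact: (Int_bnd P (mh i hi) (indic_bnd _)).
have iZ := IntZp (leqnn n).
have ig : Int P g by apply: IntD; [exact: IntZ | exact: Int_sumN].
have g0 : forall w, 0 <= g w.
  move=> w; apply: addr_ge0; first by rewrite mulr_ge0 ?expR_ge0 //; case/andP: (Zp_bnd n w).
  by apply: sumr_ge0 => i _; exact: indic_ge0.
have hg : forall w, Ev w -> 1 <= g w.
  move=> w [t [ht [h1 h2]]].
  have s0 : 0 <= \sum_(i < n) h i w by apply: sumr_ge0 => i _; exact: indic_ge0.
  have z0 : 0 <= expR (- c0) * Zp n w by rewrite mulr_ge0 ?expR_ge0 //; case/andP: (Zp_bnd n w).
  case: (pselect (exists i, (1 <= i <= n)%N /\ V i w < 0)).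
    case=> i [hi hv].
    have : h i.-1 w <= \sum_(i < n) h i w.
      apply: (sum_ge (f := fun i => h i w)); last by lia.
      by move=> j; exact: indic_ge0.
    have -> : h i.-1 w = 1.
      rewrite /h indicE mem_set //= /Nn; rewrite prednK //; lia.
    rewrite /g; lra.
  move=> hn.
  have hV0 : forall i, (1 <= i <= n)%N -> 0 <= V i w.
    move=> i hi; rewrite leNgt; apply/negP => hv; apply: hn; by exists i.
  have e : ev t w.
    by rewrite /ev h1 /= Q_eq //; case/andP: ht.
  have hz : expR c0 <= Zp n w by apply: Zp_big; exists t.
  have : expR (- c0) * expR c0 <= expR (- c0) * Zp n w by rewrite ler_wpM2l ?expR_ge0.
  rewrite -expRD addNr expR0 /g; lra.
have -> : P Ev = (\int[P]_w (\1_Ev w : R))%:E.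
  by rewrite /Rintegral integral_indic // setIT fineK // fin_num_measure.
have mEi : measurable_fun setT (\1_Ev : T -> R) by apply: measurable_indic.
rewrite lee_fin; apply: (le_trans (Rint_le (Int_bnd P mEi (indic_bnd Ev)) ig _)).
  move=> w; rewrite indicE; case: (boolP (w \in Ev)) => hw.
    by apply: hg; exact: set_mem.
  exact: g0.
rewrite /g RintD; [|exact: IntZ|exact: Int_sumN].
rewrite RintZ // Rint_sumN // big1; last first.
  move=> i _; have hi := ltn_ord i.
  rewrite /h /Rintegral integral_indic ?setIT; last by apply: mN; lia.
  have hz : P (Nn i.+1) = 0%E by apply: null_V; lia.
  exact: (congr1 fine hz).
  exact: measurableT.
rewrite addr0 -[X in _ <= X]mulr1 ler_wpM2l ?expR_ge0 //.
exact: Zp_int.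
Qed.


End Main.

Unset Implicit Arguments.

Theorem proposition1 (d : measure_display) (T : measurableType d)
  (R : realType) (P : probability T R) (n : nat)
  (F : nat -> set (set T)) (M : nat -> T -> R) (V : nat -> T -> R)
  (x alpha beta : R) :
  filtration n F ->
  sq_int_martingale P n F M ->
  (forall w, M 0%N w = 0) ->
  (forall i, (1 <= i <= n)%N ->
     cond_exp_version P (F i.-1) (fun w => (M i w - M i.-1 w) ^+ 2) (V i)) ->
  0 < x -> 0 < beta -> 0 <= alpha ->
  (P [set w | exists t, (1 <= t <= n)%N /\
        (x <= M t w)%R /\
        (cond_var V t w + quad_var M t w <= alpha * M t w + beta)%R]
   <= (expR (- (if alpha == 0 then x ^+ 2 / (8 * beta)
               else Num.min (x ^+ 2 / (8 * beta)) (x / (6 * alpha)))))%:E)%E.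
Proof.
move=> hF hM hM0 hV x0 b0 a0.
have x0' : (0:R) < x := x0.
have b0' : (0:R) < beta := b0.
have a0' : (0:R) <= alpha := a0.
apply: le_trans (final hF hM hM0 hV x0' b0' a0') _.
rewrite lee_fin ler_expR lerN2 /c0.
have hx2 : 0 <= x ^+ 2 by rewrite sqr_ge0.
have ax0 : 0 <= alpha * x by rewrite mulr_ge0 // ltW.
have key : forall c : R, 0 < c -> 2 * (alpha * x + beta) <= c ->
    x ^+ 2 / c <= x ^+ 2 / (2 * (alpha * x + beta)).
  move=> c c0 hc; rewrite ler_wpM2l // lef_pV2 ?posrE //; lra.
case: eqP => ha.
  apply: key; first by rewrite mulr_gt0.
  rewrite ha mul0r add0r; lra.
have ap : 0 < alpha by rewrite lt_neqAle eq_sym; apply/andP; split => //; apply/eqP.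
case: (leP (alpha * x) beta) => hab.
  apply: le_trans (_ : _ <= x ^+ 2 / (8 * beta)) _.
    by rewrite ge_min lexx.
  apply: key; first by rewrite mulr_gt0.
  lra.
apply: le_trans (_ : _ <= x / (6 * alpha)) _.
  by rewrite ge_min lexx orbT.
have -> : x / (6 * alpha) = x ^+ 2 / (6 * alpha * x).
  by field; apply/andP; split; rewrite gt_eqF.
apply: key; first by rewrite !mulr_gt0.
lra.
Qed.
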